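(* Let $\varphi_1,\dots,\varphi_t$ be finitely many inertial endomorphisms of an abelian group $A$ of finite torsion-free rank, let $T$ be the torsion subgroup of $A$, suppose each $\varphi_i$ induces on $A/T$ multiplication by $\frac{m_i}{n_i}$ with $m_i,n_i$ coprime integers, and let $\pi=\pi(n_1\cdots n_t)$. Then there is a $\mathbb{Z}[\varphi_1,\dots,\varphi_t]$-submodule $V$ of $A$ with $V\cong\mathbb{Q}^\pi\oplus\dots\oplus\mathbb{Q}^\pi$ ($r$ summands, for some $r\in\mathbb{N}$) such that $A/V$ is periodic.
   Context: Abelian groups are written additively. An endomorphism $\varphi$ of $A$ is inertial if $(\varphi(X)+X)/X$ is finite for every subgroup $X\le A$. A $\mathbb{Z}[\varphi_1,\dots,\varphi_t]$-submodule is a subgroup invariant under every $\varphi_i$. For the torsion-free group $A/T$, ''$\varphi_i$ induces multiplication by $\frac{m_i}{n_i}$'' means $n_i\bar\varphi_i(x)=m_ix$ for all $x\in A/T$. $\pi(n)$ is the set of prime divisors of $n$ and $\mathbb{Q}^\pi$ is the ring of rationals whose denominators are products of primes in $\pi$. *)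

(* Defs.v *)
From mathcomp Require Import all_boot all_order all_algebra.
Set Implicit Arguments. Unset Strict Implicit. Unset Printing Implicit Defensive.
Import Order.TTheory GRing.Theory Num.Theory.
Local Open Scope ring_scope.

Definition subgroup (A : zmodType) (X : A -> Prop) : Prop :=
  X 0 /\ (forall x y, X x -> X y -> X (x - y)).

Definition additive_fun (A : zmodType) (f : A -> A) : Prop :=
  forall x y, f (x + y) = f x + f y.

(* phi inertial: for every subgroup X, (phi(X) + X)/X is finite, i.e.
   finitely many cosets c + X cover phi(X) (hence phi(X) + X). *)
Definition inertial (A : zmodType) (phi : A -> A) : Prop :=
  forall X : A -> Prop, subgroup X ->
    exists s : seq A, forall x, X x -> exists c, c \in s /\ X (phi x - c).

Definition torsion (A : zmodType) (a : A) : Prop :=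
  exists k : nat, (0 < k)%N /\ a *+ k = 0.

Definition periodic_mod (A : zmodType) (V : A -> Prop) : Prop :=
  forall a : A, exists k : nat, (0 < k)%N /\ V (a *+ k).

(* Finite torsion-free rank: some finite family s spans A up to torsion,
   i.e. A/<s> is periodic (equivalently dim_Q (A (x) Q) is finite). *)
Definition finite_tf_rank (A : zmodType) : Prop :=
  exists s : seq A, periodic_mod
     (fun a => exists c : nat -> int, a = \sum_(i < size s) s`_i *~ c i).

Definition induces_mult (A : zmodType) (phi : A -> A) (m n : int) : Prop :=
  forall x : A, torsion (phi x *~ n - x *~ m).

Definition Qpi (N : nat) (q : rat) : Prop :=
  forall p : nat, prime p -> (p %| `|denq q|)%N -> (p %| N)%N.

Definition iso_Qpi_pow (A : zmodType) (N r : nat) (V : A -> Prop) : Prop :=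
  exists f : 'rV[rat]_r -> A,
    [/\ (forall u v : 'rV[rat]_r, (forall j, Qpi N (u 0 j)) -> (forall j, Qpi N (v 0 j)) ->
            f (u + v) = f u + f v),
        (forall u v : 'rV[rat]_r, (forall j, Qpi N (u 0 j)) -> (forall j, Qpi N (v 0 j)) ->
            f u = f v -> u = v) &
        (forall a, V a <-> exists2 u : 'rV[rat]_r, (forall j, Qpi N (u 0 j)) & f u = a)].

(* Main.v *)
Require Import Defs.
From mathcomp Require Import all_boot all_order all_algebra.
From Stdlib Require Import Classical.
From mathcomp Require Import ring.
Import Order.TTheory GRing.Theory Num.Theory.
Set Implicit Arguments. Unset Strict Implicit. Unset Printing Implicit Defensive.
Local Open Scope ring_scope.

Section Tors.
Variable A : zmodType.
Implicit Types x y : A.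

Lemma tors0 : torsion (0 : A).
Proof. by exists 1%N; rewrite mulr1n. Qed.

Lemma torsN x : torsion x -> torsion (- x).
Proof. by case=> k [k0 hk]; exists k; split=> //; rewrite mulNrn hk oppr0. Qed.

Lemma torsD x y : torsion x -> torsion y -> torsion (x + y).
Proof.
case=> k [k0 hk] [l [l0 hl]]; exists (k * l)%N; split; first by rewrite muln_gt0 k0.
by rewrite mulrnDl mulrnA hk mul0rn mulnC mulrnA hl mul0rn addr0.
Qed.

Lemma torsB x y : torsion x -> torsion y -> torsion (x - y).
Proof. by move=> hx hy; apply: torsD => //; apply: torsN. Qed.

Lemma torsMz x z : torsion x -> torsion (x *~ z).
Proof.
case=> k [k0 hk]; exists k; split=> //.
by rewrite pmulrn mulrzAC -pmulrn hk mul0rz.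
Qed.

Lemma torsMn x k : torsion x -> torsion (x *+ k).
Proof. by rewrite pmulrn; apply: torsMz. Qed.

Lemma torsMz_inv x z : z != 0 -> torsion (x *~ z) -> torsion x.
Proof.
case: z => [n|n] hz [k [k0 hk]].
- exists (n * k)%N; split; first by rewrite muln_gt0 k0 andbT lt0n; apply: contra hz => /eqP->.
  by move: hk; rewrite -pmulrn -mulrnA.
- exists (n.+1 * k)%N; split; first by rewrite muln_gt0 k0.
  by move: hk; rewrite NegzE mulrNz mulNrn => /eqP; rewrite oppr_eq0 -pmulrn -mulrnA => /eqP.
Qed.

Lemma torsE x : torsion x -> exists2 k : nat, (0 < k)%N & x *+ k = 0.
Proof. by case=> k [] ; exists k. Qed.

End Tors.

Section Add.
Variable A : zmodType.
Implicit Types x y : A.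

Lemma af0 (f : A -> A) : additive_fun f -> f 0 = 0.
Proof. by move=> hf; apply: (addrI (f 0)); rewrite addr0 -hf addr0. Qed.

Lemma afN (f : A -> A) : additive_fun f -> forall x, f (- x) = - f x.
Proof. by move=> hf x; apply/eqP; rewrite -subr_eq0 opprK -hf addNr af0. Qed.

Lemma afB (f : A -> A) : additive_fun f -> forall x y, f (x - y) = f x - f y.
Proof. by move=> hf x y; rewrite hf afN. Qed.

Lemma afMn (f : A -> A) : additive_fun f -> forall x k, f (x *+ k) = f x *+ k.
Proof. by move=> hf x; elim=> [|k IH]; rewrite ?mulr0n ?af0 // !mulrS hf IH. Qed.

Lemma afMz (f : A -> A) : additive_fun f -> forall x z, f (x *~ z) = f x *~ z.
Proof.
move=> hf x [n|n]; first by rewrite -!pmulrn afMn.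
by rewrite NegzE !mulrNz afN // -!pmulrn afMn.
Qed.

Lemma afsum (f : A -> A) : additive_fun f -> forall I (r : seq I) (F : I -> A),
  f (\sum_(i <- r) F i) = \sum_(i <- r) f (F i).
Proof.
move=> hf I r F; elim: r => [|i r IH]; first by rewrite !big_nil af0.
by rewrite !big_cons hf IH.
Qed.

Lemma aftors (f : A -> A) : additive_fun f -> forall x, torsion x -> torsion (f x).
Proof. by move=> hf x [k [k0 hk]]; exists k; split=> //; rewrite -afMn // hk af0. Qed.

Lemma afcomp (f g : A -> A) : additive_fun f -> additive_fun g -> additive_fun (fun x => f (g x)).
Proof. by move=> hf hg x y; rewrite hg hf. Qed.

Lemma afiter (f : A -> A) : additive_fun f -> forall k, additive_fun (iter k f).
Proof. by move=> hf; elim=> [|k IH] x y //=; rewrite IH hf. Qed.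

End Add.

Lemma min_ex (P : nat -> Prop) : (exists n, P n) -> exists n, P n /\ forall m, P m -> (n <= m)%N.
Proof.
move=> [n Pn]; apply: NNPP => hno; suff H : forall k m, (m <= k)%N -> ~ P m by exact: (H n n (leqnn n) Pn).
elim=> [|k IH] m hm Pm.
  by apply: hno; exists m; split=> // m' _; move: hm; rewrite leqn0 => /eqP->.
apply: hno; exists m; split=> // m' Pm'; rewrite leqNgt; apply/negP => hlt.
by apply: (IH m') => //; rewrite -ltnS (leq_trans hlt hm).
Qed.

Definition span (A : zmodType) (r : nat) (a : nat -> A) (x : A) :=
  exists c : nat -> int, x = \sum_(i < r) a i *~ c i.

Lemma sqr_abs (w : int) : ((`|w| * `|w|)%N)%:Z = w * w.
Proof. by rewrite -abszM gez0_abs // -expr2 sqr_ge0. Qed.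

Lemma rank_min (A : zmodType) : finite_tf_rank A ->
  exists r (a : nat -> A), periodic_mod (span r a) /\
    forall c : nat -> int, torsion (\sum_(i < r) a i *~ c i) -> forall i, (i < r)%N -> c i = 0.
Proof.
move=> [s hs].
have [r [[a ha] hmin]] : exists r, (exists a : nat -> A, periodic_mod (span r a)) /\
   forall m, (exists a : nat -> A, periodic_mod (span m a)) -> (r <= m)%N.
  by apply: min_ex; exists (size s), (fun i => s`_i).
exists r, a; split=> // c hc j0 hj0; apply: NNPP => hcj.
case: r hj0 ha hmin hc => [//|r'] hj0 ha hmin hc.
have : (r'.+1 <= r')%N; last by rewrite ltnn.
apply: hmin; exists (fun k => a (bump j0 k)) => x.
have [p [p0 [d hd]]] := ha x.
have [o o0 ho] := torsE hc.
set w := c j0 * o.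
exists (p * (`|w| * `|w|))%N; split.
  rewrite muln_gt0 p0 muln_gt0 absz_gt0 andbb /w mulf_neq0 //; first by apply/eqP.
  by rewrite lt0n in o0; apply: contra o0 => /eqP [] ->.
exists (fun k => d (bump j0 k) * (w * w) - c (bump j0 k) * o * (d j0 * w)).
pose J : 'I_r'.+1 := Ordinal hj0.
rewrite mulrnA pmulrn sqr_abs hd mulrz_suml.
rewrite (bigD1_ord J) //=.
under [RHS]eq_bigr => i _ do rewrite mulrzDr mulrNz.
rewrite sumrB.
have h2 : \sum_(i < r') a (bump j0 i) *~ (c (bump j0 i) * o * (d j0 * w)) =
   - (a j0 *~ (c j0 * o)) *~ (d j0 * w).
  move: ho; rewrite pmulrn mulrz_suml (bigD1_ord J) //= => /eqP; rewrite addrC addr_eq0 => /eqP ho.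
  rewrite (mulrzA (a j0) (c j0) o) -ho mulrz_suml; apply: eq_bigr => i _.
  by rewrite !mulrzA.
rewrite h2 mulNrz opprK addrC; congr (_ + _); last first.
  rewrite -/w -!mulrzA; congr (_ *~ _); exact: mulrCA.
by apply: eq_bigr => i _; rewrite -mulrzA.
Qed.

Section Theta.
Variables (A : zmodType) (t : nat) (phi : 'I_t -> A -> A) (m n : 'I_t -> int).
Hypothesis hadd : forall i, additive_fun (phi i).
Hypothesis hcop : forall i, coprimez (m i) (n i).
Hypothesis hmul : forall i, induces_mult (phi i) (m i) (n i).

Definition bu i := projT1 (Bezoutz (m i) (n i)).
Definition bv i := proj1_sig (projT2 (Bezoutz (m i) (n i))).
Lemma buv i : bu i * m i + bv i * n i = 1.
Proof.
rewrite /bu /bv; case: (Bezoutz (m i) (n i)) => u [v /= ->]; exact/eqP/hcop.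
Qed.

Definition thi i (x : A) := phi i x *~ bu i + x *~ bv i.

Lemma thi_add i : additive_fun (thi i).
Proof. by move=> x y; rewrite /thi hadd !mulrzDl addrACA. Qed.

Lemma thi_prop i x : torsion (thi i x *~ n i - x).
Proof.
have -> : thi i x *~ n i - x = (phi i x *~ n i - x *~ m i) *~ bu i.
  rewrite /thi mulrzDl mulrzBl mulrzAC -addrA; congr (_ + _).
  rewrite -{2}[x]mulr1z -(buv i) -!mulrzA mulrzDr opprD addrCA (mulrC (bv i)) subrr addr0.
  by rewrite mulrC.
exact/torsMz/hmul.
Qed.

Definition thl (l : seq 'I_t) : A -> A := foldr (fun i g x => thi i (g x)) id l.

Lemma thl_prop l : additive_fun (thl l) /\ forall x, torsion (thl l x *~ (\prod_(i <- l) n i) - x).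
Proof.
elim: l => [|i l [IHa IHt]] /=; first by split=> // x; rewrite big_nil mulr1z subrr; apply: tors0.
split; first by apply: afcomp => //; apply: thi_add.
move=> x; rewrite big_cons.
have -> : thi i (thl l x) *~ (n i * \prod_(j <- l) n j) - x =
   (thi i (thl l x) *~ n i - thl l x) *~ \prod_(j <- l) n j + (thl l x *~ \prod_(j <- l) n j - x).
  by rewrite mulrzBl addrA subrK mulrzA.
by apply: torsD => //; apply/torsMz/thi_prop.
Qed.

End Theta.

Lemma pi_dvd (M : nat) : forall d : nat, (0 < d)%N ->
  (forall p, prime p -> (p %| d)%N -> (p %| M)%N) -> (d %| M ^ d)%N.
Proof.
move=> d; elim: d {-2}d (leqnn d) => [|b IH] d hdb d0 hp; first by move: hdb d0; rewrite leqn0 => /eqP->.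
case: (leqP d 1) => h1.
  by have -> : d = 1%N by apply/eqP; rewrite eqn_leq h1 d0.
have pp := pdiv_prime h1; set p := pdiv d in pp *.
have pd : (p %| d)%N := pdiv_dvd d.
set d' := (d %/ p)%N.
have hd : d = (d' * p)%N by rewrite divnK.
have p1 : (1 < p)%N by apply: prime_gt1.
have d'lt : (d' < d)%N by apply: ltn_Pdiv.
have d'0 : (0 < d')%N by rewrite divn_gt0 ?prime_gt0 // dvdn_leq.
have hp' : forall q, prime q -> (q %| d')%N -> (q %| M)%N.
  move=> q pq qd; apply: hp => //; apply: dvdn_trans qd _; by rewrite hd dvdn_mulr.
have IHd := IH d' (leq_trans d'lt hdb) d'0 hp'.
rewrite {1}hd (dvdn_trans (dvdn_mul IHd (hp p pp pd))) // -expnSr dvdn_exp2l //.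
Qed.

Lemma qintE (q : rat) : denq q = 1 -> q = (numq q)%:~R.
Proof. by move=> h; rewrite numqE h mulr1. Qed.

Lemma qintM (x y : rat) : denq x = 1 -> denq y = 1 -> denq (x * y) = 1.
Proof. by move=> /qintE -> /qintE ->; rewrite -intrM denq_int. Qed.

Lemma qintD (x y : rat) : denq x = 1 -> denq y = 1 -> denq (x + y) = 1.
Proof. by move=> /qintE -> /qintE ->; rewrite -intrD denq_int. Qed.

Lemma qintB (x y : rat) : denq x = 1 -> denq y = 1 -> denq (x - y) = 1.
Proof. by move=> /qintE -> /qintE ->; rewrite -intrB denq_int. Qed.

Lemma Qpi_valid (M : int) (q : rat) : M != 0 -> Qpi `|M|%N q ->
  forall k, (`|denq q| <= k)%N -> denq (q * M%:~R ^+ k) = 1.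
Proof.
move=> M0 hq k hk.
have d0 : (0 < `|denq q|)%N by rewrite absz_gt0 denq_neq0.
have h1 := pi_dvd d0 hq.
have h2 : (denq q %| M ^+ k)%Z.
  rewrite dvdzE abszX (dvdn_trans h1) // dvdn_exp2l //.
have [w hw] := dvdzP h2.
rewrite -rmorphXn /= hw intrM mulrA mulrAC -numqE -intrM denq_int. done.
Qed.

Lemma Qpi_of_valid (M : int) (q : rat) k : denq (q * M%:~R ^+ k) = 1 -> Qpi `|M|%N q.
Proof.
move=> /qintE h p pp pd.
set z := numq _ in h.
have e : numq q * M ^+ k = z * denq q.
  apply: (@intr_inj rat); rewrite !intrM rmorphXn /= numqE -h.
  by rewrite mulrAC.
have : (`|denq q| %| `|numq q| * `|M| ^ k)%N.
  by rewrite -abszX -abszM e abszM dvdn_mull.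
rewrite Gauss_dvdr; last by rewrite coprime_sym coprime_num_den.
move=> /(dvdn_trans pd); rewrite Euclid_dvdX // => /andP [] //.
Qed.

Section Level.
Variables (A : zmodType) (th : A -> A) (N : int) (r : nat) (y : nat -> A).
Hypothesis hth : additive_fun th.
Hypothesis hy : forall j, th (y j) *~ N = y j.

Definition el k (c : 'I_r -> int) := \sum_(j < r) iter k th (y j) *~ c j.

Lemma iterN k j : iter k.+1 th (y j) *~ N = iter k th (y j).
Proof. by rewrite iterSr -afMz ?hy //; apply: afiter. Qed.

Lemma iterNk k j : iter k th (y j) *~ (N ^+ k) = y j.
Proof.
elim: k => [|k IH]; first by rewrite expr0 mulr1z.
by rewrite exprS mulrzA iterN.
Qed.

Lemma el_up k c : el k c = el k.+1 (fun j => c j * N).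
Proof. by rewrite /el; apply: eq_bigr => j _; rewrite mulrC mulrzA iterN. Qed.

Lemma el_upd k l c : el k c = el (k + l)%N (fun j => c j * N ^+ l).
Proof.
elim: l => [|l IH].
  by rewrite addn0 /el; apply: eq_bigr => j _; rewrite expr0 mulr1.
by rewrite IH el_up -addnS /el; apply: eq_bigr => j _; rewrite exprSr mulrA.
Qed.

Lemma el_sub k c c' : el k c - el k c' = el k (fun j => c j - c' j).
Proof. by rewrite /el -sumrB; apply: eq_bigr => j _; rewrite mulrzBr. Qed.

Lemma el_add k c c' : el k c + el k c' = el k (fun j => c j + c' j).
Proof. by rewrite /el -big_split; apply: eq_bigr => j _; rewrite mulrzDr. Qed.

Lemma el_down k c : el k c *~ N ^+ k = el 0 c.
Proof.
rewrite /el mulrz_suml; apply: eq_bigr => j _.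
by rewrite mulrzAC iterNk.
Qed.

Definition Xs x := exists k c, x = el k c.

Lemma Xs_el k c : Xs (el k c).
Proof. by exists k, c. Qed.

Lemma Xs_sub : subgroup Xs.
Proof.
split; first by exists 0%N, (fun _ => 0); rewrite /el big1 // => j _; rewrite mulr0z.
move=> x x' [k [c ->]] [k' [c' ->]].
rewrite (el_upd k k') (el_upd k' k) addnC el_sub; exact: Xs_el.
Qed.

End Level.

Lemma tors_sum (A : zmodType) (I : Type) (l : seq I) (F : I -> A) :
  (forall i, torsion (F i)) -> torsion (\sum_(i <- l) F i).
Proof. by move=> h; apply: (big_ind (@torsion A)) => //; [apply: tors0 | apply: torsD]. Qed.

Lemma common_e (I : eqType) (l : seq I) (Q : I -> nat -> Prop) :
  (forall i e d, Q i e -> Q i (e * d)%N) ->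
  (forall i, i \in l -> exists2 e, (0 < e)%N & Q i e) ->
  exists2 e, (0 < e)%N & forall i, i \in l -> Q i e.
Proof.
move=> hm; elim: l => [|i l IH] h; first by exists 1%N.
have [e1 e10 h1] := h i (mem_head _ _).
have [e2 e20 h2] := IH (fun j jl => h j (@mem_behead _ (i :: l) j jl)).
exists (e1 * e2)%N; first by rewrite muln_gt0 e10.
move=> j; rewrite in_cons => /orP [/eqP -> | jl]; first exact: hm.
by rewrite mulnC; apply: hm; apply: h2.
Qed.

Section Main.
Variables (A : zmodType) (t : nat) (phi : 'I_t -> A -> A) (m n : 'I_t -> int).
Hypothesis hadd : forall i, additive_fun (phi i).
Hypothesis hin : forall i, inertial (phi i).
Hypothesis hmul : forall i, induces_mult (phi i) (m i) (n i).
Hypothesis hn0 : forall i, n i != 0.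
Variables (th : A -> A) (N : int) (Ni : 'I_t -> int) (r : nat) (y : nat -> A).
Hypothesis hth : additive_fun th.
Hypothesis hy : forall j, th (y j) *~ N = y j.
Hypothesis hNi : forall i, N = n i * Ni i.

Lemma K0 i z : th z *~ N = z -> torsion (phi i z - th z *~ (m i * Ni i)).
Proof.
move=> hz; apply: (torsMz_inv (hn0 i)).
rewrite mulrzBl mulrzA_C mulrCA -hNi mulrC mulrzA hz.
exact: hmul.
Qed.

Lemma K1 i k (c : 'I_r -> int) : torsion (phi i (el th y k c) - el th y k.+1 (fun j => c j * (m i * Ni i))).
Proof.
rewrite /el afsum // -sumrB; apply: tors_sum => j.
rewrite afMz // -mulrzA_C -mulrzBl; apply: torsMz.
by apply: K0; rewrite -iterS (iterN hth hy).
Qed.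

Lemma inert_e : exists2 e, (0 < e)%N & forall i x, Xs th r y x ->
  exists2 x', Xs th r y x' & phi i x *+ e = x' *+ e.
Proof.
pose Q (i : 'I_t) e := forall x, Xs th r y x -> exists2 x', Xs th r y x' & phi i x *+ e = x' *+ e.
have [e e0 he] : exists2 e, (0 < e)%N & forall i, i \in enum 'I_t -> Q i e.
  apply: common_e.
    move=> i e d hQ x hx; have [x' hx' h] := hQ x hx; exists x' => //.
    by rewrite !mulrnA h.
  move=> i _.
  have [s hs] := hin i (Xs_sub r hth hy).
  pose R (f : A) e := (exists2 x'', Xs th r y x'' & torsion (f - x'')) ->
     exists2 x'', Xs th r y x'' & (f - x'') *+ e = 0.
  have [e e0 he] : exists2 e, (0 < e)%N & forall f, f \in s -> R f e.
    apply: common_e.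
      move=> f e d hR hh; have [x'' hx h] := hR hh; exists x'' => //.
      by rewrite mulrnA h mul0rn.
    move=> f _; case: (classic (exists2 x'', Xs th r y x'' & torsion (f - x''))).
      move=> [x'' hx [k [k0 hk]]]; exists k => // _; by exists x''.
    by move=> hno; exists 1%N => // hh; case: (hno hh).
  exists e => // x [k [c ->]].
  have [f [fs hf]] := hs _ (Xs_el th y k c).
  have ht := K1 i k c.
  have hx4 : Xs th r y (el th y k.+1 (fun j => c j * (m i * Ni i)) - (phi i (el th y k c) - f)).
    by apply: (Xs_sub r hth hy).2 => //; apply: Xs_el.
  have [x5 hx5 h5] : exists2 x'', Xs th r y x'' & (f - x'') *+ e = 0.
    apply: (he f fs); exists (el th y k.+1 (fun j => c j * (m i * Ni i)) - (phi i (el th y k c) - f)) => //.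
    by rewrite (opprB (el th y k.+1 (fun j => c j * (m i * Ni i)))) addrA [f + _]addrC subrK.
  exists (phi i (el th y k c) - f + x5).
    have h0 := (Xs_sub r hth hy).2 _ _ hf ((Xs_sub r hth hy).2 _ _ ((Xs_sub r hth hy).1) hx5).
    by move: h0; rewrite sub0r opprK.
  by rewrite -[X in X *+ e = _](subrK (f - x5)) mulrnDl h5 addr0 (opprB f) [x5 - f]addrC addrA.
exists e => // i x hx; exact: (he i (mem_enum _ i) x hx).
Qed.

End Main.

Section Iso.
Variables (A : zmodType) (th : A -> A) (N : int) (r : nat) (y : nat -> A) (e : nat).
Hypothesis hth : additive_fun th.
Hypothesis hy : forall j, th (y j) *~ N = y j.
Hypothesis hN : N != 0.

Definition Kf (u : 'rV[rat]_r) := (\sum_(j < r) `|denq (u 0%R j)|)%N.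
Definition cf (u : 'rV[rat]_r) k := fun j : 'I_r => numq (u 0 j * N%:~R ^+ k).
Definition valid (u : 'rV[rat]_r) k := forall j, denq (u 0 j * N%:~R ^+ k) = 1.
Definition fm (u : 'rV[rat]_r) := el th y (Kf u) (cf u (Kf u)) *+ e.

Lemma vup u k l : valid u k -> valid u (k + l) /\ forall j, cf u (k + l) j = cf u k j * N ^+ l.
Proof.
move=> hv.
have h j : u 0 j * N%:~R ^+ (k + l) = (cf u k j * N ^+ l)%:~R.
  by rewrite exprD mulrA [u 0 j * _](qintE (hv j)) intrM rmorphXn.
by split=> j; rewrite ?/cf h ?numq_int ?denq_int.
Qed.

Lemma elcf u k l : valid u k -> el th y (k + l) (cf u (k + l)) = el th y k (cf u k).
Proof.
move=> hv; rewrite (el_upd hth hy k l); apply: eq_bigr => j _.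
by rewrite (vup l hv).2.
Qed.

Lemma elcf2 u k1 k2 : valid u k1 -> valid u k2 -> el th y k1 (cf u k1) = el th y k2 (cf u k2).
Proof.
move=> h1 h2; case: (leqP k1 k2) => hk.
  by rewrite -(subnKC hk) elcf.
by rewrite -(subnKC (ltnW hk)) elcf.
Qed.

Definition Qrow (u : 'rV[rat]_r) := forall j, Qpi `|N|%N (u 0 j).

Lemma QK u l : Qrow u -> valid u (Kf u + l).
Proof.
move=> hq j; apply: Qpi_valid => //.
apply: leq_trans (leq_addr _ _); rewrite /Kf (bigD1 j) //=; exact: leq_addr.
Qed.

Lemma fmE u k : Qrow u -> valid u k -> fm u = el th y k (cf u k) *+ e.
Proof. by move=> hq hv; rewrite /fm (@elcf2 u (Kf u) k) // -[Kf u]addn0; apply: QK. Qed.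

Lemma Qrow_of_valid u k : valid u k -> Qrow u.
Proof. by move=> hv j; apply: (@Qpi_of_valid N (u 0 j) k). Qed.

Lemma validD u v k : valid u k -> valid v k -> valid (u + v) k.
Proof. by move=> hu hv j; rewrite mxE mulrDl qintD. Qed.

Lemma fmD u v : Qrow u -> Qrow v -> fm (u + v) = fm u + fm v.
Proof.
move=> hu hv.
have vu := QK (Kf v) hu; have vv : valid v (Kf u + Kf v) by rewrite addnC; apply: QK.
have vuv := validD vu vv.
rewrite (fmE hu vu) (fmE hv vv) (fmE (Qrow_of_valid vuv) vuv) -mulrnDl el_add; congr (_ *+ _).
apply: eq_bigr => j _; congr (_ *~ _).
rewrite /cf mxE mulrDl [u 0 j * _](qintE (vu j)) [v 0 j * _](qintE (vv j)).
by rewrite -intrD !numq_int.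
Qed.

Lemma fm_of_el k (c : 'I_r -> int) :
  exists2 u, Qrow u & fm u = el th y k c *+ e.
Proof.
have Nk : (N%:~R : rat) ^+ k != 0 by rewrite expf_neq0 // intr_eq0.
pose u : 'rV[rat]_r := \row_j ((c j)%:~R / N%:~R ^+ k).
have hu j : u 0 j * N%:~R ^+ k = (c j)%:~R by rewrite mxE mulfVK.
have vu : valid u k by move=> j; rewrite hu denq_int.
exists u; first exact: Qrow_of_valid vu.
rewrite (fmE (Qrow_of_valid vu) vu); congr (_ *+ _); apply: eq_bigr => j _.
by rewrite /cf hu numq_int.
Qed.

Variables (a : nat -> A) (o : nat).
Hypothesis hya : forall j, (j < r)%N -> y j = a j *+ o.
Hypothesis o0 : (0 < o)%N.
Hypothesis e0 : (0 < e)%N.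
Hypothesis hind : forall c : nat -> int, torsion (\sum_(i < r) a i *~ c i) -> forall i, (i < r)%N -> c i = 0.

Lemma el0_zero (d : 'I_r -> int) : el th y 0 d *+ e = 0 -> forall j, d j = 0.
Proof.
move=> h j.
pose C n := oapp (fun j : 'I_r => d j * ((o * e)%N)%:Z) 0 (insub n).
have hC : \sum_(i < r) a i *~ C i = 0.
  rewrite -[RHS]h /el -sumrMnl; apply: eq_bigr => i _.
  rewrite /C valK /= (hya (ltn_ord i)) !pmulrn !mulrzA_C; congr (_ *~ _).
  by rewrite PoszM; ring.
have hT : torsion (\sum_(i < r) a i *~ C i) by rewrite hC; apply: tors0.
have := hind hT (ltn_ord j).
rewrite /C valK /= => /eqP; rewrite mulf_eq0 => /orP [/eqP //|].
by move=> /eqP [] /eqP; rewrite muln_eq0 (gtn_eqF o0) (gtn_eqF e0).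
Qed.

Lemma fm_inj u v : Qrow u -> Qrow v -> fm u = fm v -> u = v.
Proof.
move=> hu hv.
have vu := QK (Kf v) hu; have vv : valid v (Kf u + Kf v) by rewrite addnC; apply: QK.
rewrite (fmE hu vu) (fmE hv vv) => /eqP; rewrite -subr_eq0 -mulrnBl el_sub => /eqP h.
have h0 := el0_zero (d := fun j => cf u (Kf u + Kf v) j - cf v (Kf u + Kf v) j).
have Nk : (N%:~R : rat) ^+ (Kf u + Kf v) != 0 by rewrite expf_neq0 // intr_eq0.
apply/rowP => j; apply: (mulIf Nk); rewrite (qintE (vu j)) (qintE (vv j)).
apply/eqP; rewrite eqr_int -subr_eq0; apply/eqP; apply: h0.
by rewrite -(el_down hth hy (Kf u + Kf v)) pmulrn mulrzAC -pmulrn h mul0rz.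
Qed.

End Iso.

Lemma common_o (A : zmodType) (x : nat -> A) r : (forall j, (j < r)%N -> torsion (x j)) ->
  exists2 o, (0 < o)%N & forall j, (j < r)%N -> x j *+ o = 0.
Proof.
move=> h.
have [o o0 ho] : exists2 o, (0 < o)%N & forall j, j \in iota 0 r -> x j *+ o = 0.
  apply: common_e; first by move=> i e d hh; rewrite mulrnA hh mul0rn.
  move=> j; rewrite mem_iota /= => hj; have [k [k0 hk]] := h j hj; by exists k.
by exists o => // j hj; apply: ho; rewrite mem_iota.
Qed.

Lemma core (A : zmodType) (t : nat) (phi : 'I_t -> A -> A) (m n : 'I_t -> int)
  (hadd : forall i, additive_fun (phi i))
  (hin : forall i, inertial (phi i))
  (hmul : forall i, induces_mult (phi i) (m i) (n i))
  (hn0 : forall i, n i != 0)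
  (th : A -> A) (N : int) (Ni : 'I_t -> int)
  (hth : additive_fun th) (hN : N != 0) (hthN : forall x, torsion (th x *~ N - x))
  (hNi : forall i, N = n i * Ni i)
  (hrank : finite_tf_rank A) :
  exists (V : A -> Prop) (r : nat),
    [/\ subgroup V,
        (forall i a, V a -> V (phi i a)),
        iso_Qpi_pow `|N|%N r V &
        periodic_mod V].
Proof.
have [r [a [hper hind]]] := rank_min hrank.
have [o o0 ho] := @common_o A (fun j => th (a j) *~ N - a j) r (fun j _ => hthN (a j)).
pose y j := if (j < r)%N then a j *+ o else 0.
have hy : forall j, th (y j) *~ N = y j.
  move=> j; rewrite /y; case: ifP => hj; last by rewrite af0 // mul0rz.
  rewrite afMn // pmulrn mulrzAC -pmulrn; apply/eqP; rewrite -subr_eq0 -mulrnBl; apply/eqP; exact: ho j hj.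
have hya : forall j, (j < r)%N -> y j = a j *+ o by move=> j hj; rewrite /y hj.
have [e e0 he] := inert_e hadd hin hmul hn0 r hth hy hNi.
exists (fun z => exists2 x, Xs th r y x & z = x *+ e), r; split.
- split; first by exists 0; [apply: (Xs_sub r hth hy).1 | rewrite mul0rn].
  move=> z z' [x hx ->] [x' hx' ->]; exists (x - x'); last by rewrite mulrnBl.
  exact: (Xs_sub r hth hy).2.
- move=> i z [x hx ->]; have [x' hx' h] := he i x hx; exists x' => //.
  by rewrite afMn.
- exists (fm th N y e); split.
  + by move=> u v hu hv; apply: fmD.
  + by move=> u v hu hv; apply: (fm_inj hth hy hN hya o0 e0 hind).
  + move=> z; split.
      by move=> [x [k [c ->]] ->]; have [u hu hf] := fm_of_el e hth hy hN k c; exists u.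
    move=> [u hu <-]; exists (el th y (Kf u) (cf N u (Kf u))) => //; exact: Xs_el.
- move=> z; have [p [p0 [c hc]]] := hper z.
  exists (p * o * e)%N; split; first by rewrite !muln_gt0 p0 o0 e0.
  exists (el th y 0 (fun j : 'I_r => c j)); first exact: Xs_el.
  rewrite !mulrnA hc -!sumrMnl; apply: eq_bigr => j _.
  by rewrite /= (hya _ (ltn_ord j)) pmulrn mulrzAC -pmulrn.
Qed.

Unset Implicit Arguments.

Theorem lemma5p1 (A : zmodType) (t : nat) (phi : 'I_t -> A -> A)
  (m n : 'I_t -> int)
  (hadd : forall i, additive_fun (phi i))
  (hin : forall i, inertial (phi i))
  (hrank : finite_tf_rank A)
  (hn0 : forall i, n i != 0)
  (hcop : forall i, coprimez (m i) (n i))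
  (hmul : forall i, induces_mult (phi i) (m i) (n i)) :
  exists (V : A -> Prop) (r : nat),
    [/\ subgroup V,
        (forall i a, V a -> V (phi i a)),
        iso_Qpi_pow `|(\prod_(i < t) n i)%R|%N r V &
        periodic_mod V].
Proof.
have [hta htt] := thl_prop hadd hcop hmul (index_enum 'I_t).
apply: (core hadd hin hmul hn0 (Ni := fun i => \prod_(j < t | j != i) n j) hta _ htt) => //.
  by apply/prodf_neq0 => i _.
by move=> i; rewrite (bigD1 i).
Qed.
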